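(* Let $\mathbb{K}$ be a field and let $P_1, P_2 \in \mathbb{K}[X]$ be irreducible. If there exists a ring isomorphism $f : \mathbb{K}[X]/(P_1) \to \mathbb{K}[X]/(P_2)$ stabilizing $\mathbb{K}$ such that $Q_f' \neq 0$, then the rings $\mathbb{K}[X]/(P_1^n)$ and $\mathbb{K}[X]/(P_2^n)$ are isomorphic for all $n \geq 1$.
   Context: A ring homomorphism $f : A \to B$ between $\mathbb{K}$-algebras stabilizes $\mathbb{K}$ if there is a field automorphism $\sigma_f$ of $\mathbb{K}$ with $f(a) = \sigma_f(a)$ for all $a \in \mathbb{K}$. For a ring isomorphism $f : \mathbb{K}[X]/(P_1) \to \mathbb{K}[X]/(P_2)$ stabilizing $\mathbb{K}$, $Q_f$ is the unique polynomial of degree $< \deg P_2$ such that $f$ sends the class of $X$ to the class of $Q_f$; $'$ denotes the formal derivative. *)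

(* Defs.v *)
From HB Require Import structures.
From mathcomp Require Import all_boot all_order all_algebra.
Set Implicit Arguments. Unset Strict Implicit. Unset Printing Implicit Defensive.
Import GRing.Theory.
Local Open Scope ring_scope.

(* K[X]/(P): the ideal (P) is generated by the monic associate of P
   (for P != 0); MathComp's qpoly construction quotients by a monic
   polynomial, so we quotient by (lead_coef P)^-1 *: P. *)
Definition monic_assoc (K : fieldType) (P : {poly K}) : {poly K} :=
  (lead_coef P)^-1 *: P.

Definition quot_ring (K : fieldType) (P : {poly K}) : Type :=
  {poly %/ monic_assoc P}.

Definition qconst (K : fieldType) (P : {poly K}) (a : K) : quot_ring P :=
  qpolyC (monic_assoc P) a.

Definition qX (K : fieldType) (P : {poly K}) : quot_ring P :=
  qpolyX (monic_assoc P).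

Definition stabilizes_K (K : fieldType) (P1 P2 : {poly K})
    (f : quot_ring P1 -> quot_ring P2) : Prop :=
  exists sigma : {rmorphism K -> K},
    bijective sigma /\ forall a : K, f (qconst P1 a) = qconst P2 (sigma a).

(* Q_f: the unique representative of degree < deg P2 of f (class of X) *)
Definition Q_f (K : fieldType) (P1 P2 : {poly K})
    (f : quot_ring P1 -> quot_ring P2) : {poly K} :=
  val (f (qX P1)).

(* Main.v *)
Require Import Defs.
From HB Require Import structures.
From mathcomp Require Import all_boot all_order all_algebra.
From mathcomp Require Import ring.
Import GRing.Theory.
Local Open Scope ring_scope.

Lemma dvdp_comp_cong {K : fieldType} (P p u v : {poly K}) :
  P %| u - v -> P %| (p \Po u) - (p \Po v).
Proof.
move=> H; elim/poly_ind: p => [|p c IH]; first by rewrite !comp_poly0 subrr dvdp0.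
rewrite !comp_poly_MXaddC.
have ->: (p \Po u) * u + c%:P - ((p \Po v) * v + c%:P) =
   ((p \Po u) - (p \Po v)) * u + (p \Po v) * (u - v) by ring.
by apply: dvdp_add; [apply: dvdp_mulr | apply: dvdp_mull].
Qed.

Lemma taylor1 {K : fieldType} (p u h : {poly K}) :
  h ^+ 2 %| (p \Po (u + h)) - (p \Po u) - (p^`() \Po u) * h.
Proof.
elim/poly_ind: p => [|p c IH].
  by rewrite deriv0 !comp_poly0 mul0r !subrr dvdp0.
case/dvdpP: IH => E HE.
rewrite derivMXaddC !comp_poly_MXaddC comp_polyD comp_polyM comp_polyX.
have -> : p \Po (u+h) = (p \Po u) + (p^`() \Po u) * h + E * h^+2.
  by rewrite -HE; ring.
apply/dvdpP; exists (E*(u+h) + (p^`() \Po u)); ring.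
Qed.

Lemma dvdp_deriv {K : fieldType} (P A : {poly K}) :
  P^`() = 0 -> P %| A -> P %| A^`().
Proof.
by move=> dP /dvdpP [B ->]; rewrite derivM dP mulr0 addr0 dvdp_mull // dvdpp.
Qed.

Notation qin P := (in_qpoly (monic_assoc P)).

Lemma monic_assoc_monic (K : fieldType) (P : {poly K}) : P != 0 ->
  monic_assoc P \is monic.
Proof.
move=> P0; rewrite monicE /monic_assoc lead_coefZ mulVf // lead_coef_eq0 //.
Qed.

Lemma size_monic_assoc (K : fieldType) (P : {poly K}) : size (monic_assoc P) = size P.
Proof.
have [->|P0] := eqVneq P 0; first by rewrite /monic_assoc scaler0.
by rewrite size_scale // invr_eq0 lead_coef_eq0.
Qed.

Lemma mk_monic_assoc (K : fieldType) (P : {poly K}) : (1 < size P)%N ->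
  mk_monic (monic_assoc P) = monic_assoc P.
Proof.
move=> sP; have P0 : P != 0 by rewrite -size_poly_gt0 (ltn_trans _ sP).
by rewrite /mk_monic size_monic_assoc sP monic_assoc_monic.
Qed.

Lemma val_qin (K : fieldType) (P h : {poly K}) : (1 < size P)%N ->
  val (qin P h) = h %% P.
Proof.
move=> sP; have P0 : P != 0 by rewrite -size_poly_gt0 (ltn_trans _ sP).
rewrite /= mk_monic_assoc // -Pdiv.IdomainMonic.modpE ?monic_assoc_monic //.
by rewrite /monic_assoc modpZr // invr_eq0 lead_coef_eq0.
Qed.

Lemma size_qval (K : fieldType) (P : {poly K}) (a : quot_ring P) : (1 < size P)%N ->
  (size (val a) < size P)%N.
Proof.
move=> sP; have H := size_mk_monic a; move: H; move: (size _) => k. by rewrite mk_monic_assoc // size_monic_assoc.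
Qed.

Lemma qin_val (K : fieldType) (P : {poly K}) (a : quot_ring P) : (1 < size P)%N ->
  qin P (val a) = a.
Proof.
move=> sP; apply: val_inj; rewrite val_qin // modp_small //; exact: size_qval.
Qed.

Lemma qin_eq0 (K : fieldType) (P h : {poly K}) : (1 < size P)%N ->
  (qin P h == 0) = (P %| h).
Proof.
by move=> sP; rewrite -(inj_eq val_inj) val_qin //.
Qed.

Lemma qconstE (K : fieldType) (P : {poly K}) a : (1 < size P)%N ->
  qconst P a = qin P a%:P.
Proof.
move=> sP; apply: val_inj; rewrite val_qin // modp_small /qconst ?qpolyCE //.
by rewrite (leq_ltn_trans (size_polyC_leq1 _)).
Qed.

Lemma f_qin (K : fieldType) (P1 P2 : {poly K})
  (f : {rmorphism quot_ring P1 -> quot_ring P2}) (s : {rmorphism K -> K}) :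
  (1 < size P1)%N -> (1 < size P2)%N ->
  (forall a, f (qconst P1 a) = qconst P2 (s a)) ->
  forall h, f (qin P1 h) = qin P2 (map_poly s h \Po Q_f f).
Proof.
move=> s1 s2 fs; elim/poly_ind => [|p c IH]; first by rewrite !rmorph0.
rewrite in_qpolyD in_qpolyM rmorphD rmorphM /= rmorphD rmorphM /= map_polyX map_polyC /=.
rewrite comp_polyD comp_polyM comp_polyX comp_polyC in_qpolyD in_qpolyM /=.
rewrite -!qconstE // fs IH; congr (_ * _ + _).
by rewrite /Q_f qin_val.
Qed.

Lemma exists_y (K : fieldType) (P1 P2 Q : {poly K}) (s : {rmorphism K -> K}) (t : K -> K) :
  irreducible_poly P1 -> irreducible_poly P2 ->
  (forall h, map_poly s (map_poly t h) = h) ->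
  (forall h, P2 %| (map_poly s h \Po Q) -> P1 %| h) ->
  P2 %| (map_poly s P1 \Po Q) ->
  (exists R, P2 %| (map_poly s R \Po Q) - 'X) ->
  Q^`() != 0 -> (size Q < size P2)%N ->
  exists y, P2 %| y - Q /\ ~~ (P2 ^+ 2 %| (map_poly s P1 \Po y)).
Proof.
move=> iP1 iP2 st Hinj Hroot [R HR] dQ sQ.
have sP1 : (1 < size P1)%N by case: iP1.
have sP2 : (1 < size P2)%N by case: iP2.
have P10 : P1 != 0 by rewrite -size_poly_gt0 (ltn_trans _ sP1).
have P20 : P2 != 0 by rewrite -size_poly_gt0 (ltn_trans _ sP2).
have Q0 : Q != 0 by apply: contraNneq dQ => ->; rewrite deriv0.
have nP2dQ : ~~ (P2 %| Q^`()).
  apply/negP => /(dvdp_leq dQ); rewrite leqNgt.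
  by rewrite (ltn_trans (lt_size_deriv Q0) sQ).
case: (boolP (P2 ^+ 2 %| map_poly s P1 \Po Q)) => [F2|nF2]; last first.
  by exists Q; rewrite subrr dvdp0.
case: (boolP (P2 %| ((map_poly s P1)^`() \Po Q))) => [PD|nPD]; last first.
  exists (Q + P2); split; first by rewrite addrAC subrr add0r dvdpp.
  apply/negP => H; have T := taylor1 (map_poly s P1) Q P2.
  have : P2^+2 %| ((map_poly s P1)^`() \Po Q) * P2.
    have -> : ((map_poly s P1)^`() \Po Q) * P2 =
      (map_poly s P1 \Po (Q + P2)) - (map_poly s P1 \Po Q) -
      ((map_poly s P1 \Po (Q + P2)) - (map_poly s P1 \Po Q) -
        ((map_poly s P1)^`() \Po Q) * P2) by ring.
    by apply: dvdp_sub => //; apply: dvdp_sub.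
  by rewrite expr2 dvdp_mul2r // (negPf nPD).
exfalso.
have dP1 : P1^`() = 0.
  rewrite deriv_map in PD; have := Hinj _ PD.
  case: (eqVneq P1^`() 0) => // nz /(dvdp_leq nz).
  by rewrite leqNgt lt_size_deriv.
set W := map_poly s R \Po Q.
set S := (W - 'X) %/ P2.
have WE : W = 'X + S * P2 by rewrite /S divpK // addrC subrK.
set P2t := map_poly t P2.
have HW2 : map_poly s (P2t \Po R) \Po Q = P2 \Po W.
  by rewrite map_comp_poly st -comp_polyA.
have P1d : P1 %| P2t \Po R.
  apply: Hinj; rewrite HW2.
  have := @dvdp_comp_cong _ P2 P2 _ _ HR; rewrite comp_polyXr.
  by rewrite dvdp_subl // dvdpp.
case/dvdpP: P1d => U HU.
have H22 : P2^+2 %| P2 \Po W.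
  rewrite -HW2 HU rmorphM comp_polyM; exact: dvdp_mull.
have H1 : P2 %| 1 + P2^`() * S.
  have T := taylor1 P2 'X (S*P2).
  rewrite !comp_polyXr -WE in T.
  have T' : P2^+2 %| (P2 \Po W) - P2 - P2^`() * (S * P2).
    apply: (dvdp_trans _ T); rewrite exprMn; exact: dvdp_mull.
  have : P2^+2 %| P2 * (1 + P2^`() * S).
    have -> : P2 * (1 + P2^`() * S) = (P2 \Po W) - ((P2 \Po W) - P2 - P2^`() * (S * P2)) by ring.
    by apply: dvdp_sub.
  by rewrite expr2 dvdp_mul2l.
have H2 : P2 %| ((map_poly s R)^`() \Po Q) * Q^`().
  have -> : ((map_poly s R)^`() \Po Q) * Q^`() = (1 + P2^`() * S) + S^`() * P2.
    by rewrite -deriv_comp -/W WE derivD derivX derivM; ring.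
  by rewrite dvdp_add // dvdp_mull // dvdpp.
rewrite Gauss_dvdpl ?irreducible_poly_coprime // deriv_map in H2.
have HR' := Hinj _ H2.
have HQ0 : P1 %| (map_poly t Q \Po R) - 'X.
  apply: Hinj.
rewrite rmorphB /=. rewrite map_comp_poly st map_polyX.
  rewrite comp_polyB -comp_polyA comp_polyX.
  by have := @dvdp_comp_cong _ P2 Q _ _ HR; rewrite comp_polyXr.
have := @dvdp_deriv _ P1 _ dP1 HQ0; rewrite derivB deriv_comp derivX.
rewrite dvdp_subr ?dvdp_mull // dvdp1.
by move/eqP=> e; rewrite e in sP1.
Qed.

Lemma comp_polyXn {K : fieldType} (p q : {poly K}) k : (p ^+ k) \Po q = (p \Po q) ^+ k.
Proof.
elim: k => [|k IH]; first by rewrite !expr0 comp_polyC.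
by rewrite !exprS comp_polyM IH.
Qed.

Lemma qin_eq (K : fieldType) (P u v : {poly K}) : (1 < size P)%N ->
  P %| u - v -> qin P u = qin P v.
Proof.
move=> sP H; apply/eqP; rewrite -subr_eq0 -raddfB qin_eq0 //.
Qed.

Lemma size_exp_gt1 (K : fieldType) (P : {poly K}) n : (1 < size P)%N -> (1 <= n)%N ->
  (1 < size (P ^+ n))%N.
Proof.
move=> sP n1; suff: (0 < (size (P ^+ n)).-1)%N by case: size => [|[]].
by rewrite size_exp muln_gt0 ltn_predRL sP n1.
Qed.

Definition Gfun (K : fieldType) (P1 P2 y : {poly K}) (s : {rmorphism K -> K}) (n : nat)
  (a : quot_ring (P1 ^+ n)) : quot_ring (P2 ^+ n) :=
  qin (P2 ^+ n) (map_poly s (val a) \Po y).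

Definition Ghyp (K : fieldType) (P1 P2 y : {poly K}) (s : {rmorphism K -> K}) (n : nat) :=
  [&& (1 < size (P1 ^+ n))%N, (1 < size (P2 ^+ n))%N &
      P2 ^+ n %| (map_poly s P1 \Po y) ^+ n].

Definition Gfun2 (K : fieldType) (P1 P2 y : {poly K}) (s : {rmorphism K -> K}) (n : nat)
  (H : Ghyp K P1 P2 y s n) := @Gfun K P1 P2 y s n.

Lemma Gcong (K : fieldType) (P1 P2 y : {poly K}) (s : {rmorphism K -> K}) (n : nat) (u v : {poly K}) :
  P2 ^+ n %| (map_poly s P1 \Po y) ^+ n ->
  P1 ^+ n %| u - v -> P2 ^+ n %| (map_poly s u \Po y) - (map_poly s v \Po y).
Proof.
move=> H /dvdpP [e He].
rewrite -comp_polyB -rmorphB He rmorphM rmorphXn comp_polyM comp_polyXn.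
exact: dvdp_mull.
Qed.

Lemma Gfun2_zmod K P1 P2 y s n H : zmod_morphism (@Gfun2 K P1 P2 y s n H).
Proof.
move=> a b; rewrite /Gfun2 /Gfun.
have -> : val (a - b) = val a - val b by [].
by rewrite rmorphB comp_polyB raddfB.
Qed.

Lemma Gfun2_monoid K P1 P2 y s n H : monoid_morphism (@Gfun2 K P1 P2 y s n H).
Proof.
case/and3P: (H) => s1 s2 H3; rewrite /Gfun2 /Gfun; split.
  have -> : val (1 : quot_ring (P1 ^+ n)) = 1 by apply: qpolyCE.
  by rewrite rmorph1 comp_polyC in_qpoly1.
move=> a b.
have -> : val (a * b) = val (qin (P1 ^+ n) (val a * val b)) by [].
rewrite val_qin // -in_qpolyM -comp_polyM -rmorphM.
apply: qin_eq => //; apply: Gcong H3 _.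
have -> : (val a * val b) %% P1 ^+ n - val a * val b =
   - ((val a * val b) %/ P1 ^+ n) * P1 ^+ n.
  by rewrite {2}(divp_eq (val a * val b) (P1 ^+ n)); ring.
exact: dvdp_mull.
Qed.

HB.instance Definition _ K P1 P2 y s n H :=
  GRing.isZmodMorphism.Build _ _ (@Gfun2 K P1 P2 y s n H) (@Gfun2_zmod K P1 P2 y s n H).
HB.instance Definition _ K P1 P2 y s n H :=
  GRing.isMonoidMorphism.Build _ _ (@Gfun2 K P1 P2 y s n H) (@Gfun2_monoid K P1 P2 y s n H).


Lemma surj_dim (K : fieldType) (U V : vectType K) (f : {linear U -> V}) :
  (forall v, exists u, f u = v) -> (\dim {:V} <= \dim {:U})%N.
Proof.
move=> hs; set F := linfun f.
have -> : (fullv : {vspace V}) = limg F.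
  apply/eqP; rewrite eqEsubv subvf andbT; apply/subvP => v _.
  by case: (hs v) => u <-; rewrite -(lfunE f) memv_img ?memvf.
by rewrite -(limg_ker_dim F fullv) leq_addl.
Qed.

Lemma inj_surj (K : fieldType) (U : vectType K) (f : {linear U -> U}) :
  injective f -> forall v, exists u, f u = v.
Proof.
move=> fi v; set F : 'End(U) := linfun f.
have k0 : lker F == 0%VS by apply/lker0P => x y; rewrite !lfunE; exact: fi.
have : v \in limg F by rewrite lker0_limgf // memvf.
by case/memv_imgP => u _ ->; exists u; rewrite lfunE.
Qed.

Definition Lfun (K : fieldType) (P2 Q : {poly K}) (m : nat) (v : {poly_m K}) : quot_ring P2 :=
  qin P2 (val v \Po Q).

Lemma Lfun_lin K P2 Q m : linear (@Lfun K P2 Q m).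
Proof.
move=> a u v; rewrite /Lfun.
have -> : val (a *: u + v) = a *: val u + val v by [].
by rewrite comp_polyD comp_polyZ in_qpolyD in_qpolyZ.
Qed.

HB.instance Definition _ (K : fieldType) (P2 Q : {poly K}) (m : nat) :=
  GRing.isSemilinear.Build K {poly_m K} (quot_ring P2) _ (@Lfun K P2 Q m)
    (GRing.semilinear_linear (@Lfun_lin K P2 Q m)).

Lemma dim_quot (K : fieldType) (P : {poly K}) : (1 < size P)%N ->
  \dim {:quot_ring P} = (size P).-1.
Proof.
move=> sP; apply: etrans (dim_polyn _ _) _.
by rewrite mk_monic_assoc // size_monic_assoc.
Qed.

Lemma inj_pow (K : fieldType) (P1 P2 y : {poly K}) (s : {rmorphism K -> K}) :
  irreducible_poly P2 ->
  (forall h, P2 %| (map_poly s h \Po y) -> P1 %| h) ->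
  P2 %| (map_poly s P1 \Po y) ->
  ~~ (P2 ^+ 2 %| (map_poly s P1 \Po y)) ->
  forall k h, P2 ^+ k %| (map_poly s h \Po y) -> P1 ^+ k %| h.
Proof.
move=> iP2 Hinj Hroot nP k; elim: k => [|k IH] h; first by move=> _; rewrite expr0 dvd1p.
have sP2 : (1 < size P2)%N by case: iP2.
have P20 : P2 != 0 by rewrite -size_poly_gt0 (ltn_trans _ sP2).
rewrite exprS => H.
have /dvdpP [h1 eh] : P1 %| h.
  by apply: Hinj; apply: (dvdp_trans _ H); apply: dvdp_mulIl.
case/dvdpP: Hroot => T HT.
have nT : ~~ (P2 %| T).
  apply: contra nP => PT; rewrite HT expr2; apply: dvdp_mul => //; exact: dvdpp.
move: H; rewrite eh rmorphM comp_polyM HT mulrA [P2 * _]mulrC dvdp_mul2r //.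
rewrite Gauss_dvdpl; last by apply: coprimep_expl; rewrite irreducible_poly_coprime.
move/IH => H1; rewrite exprS mulrC; exact: dvdp_mul.
Qed.

Lemma inj_surj_bij (A : choiceType) (B : eqType) (f : A -> B) :
  injective f -> (forall b, exists a, f a = b) -> bijective f.
Proof.
move=> fi fs.
have fs' : forall b, exists a, f a == b by move=> b; case: (fs b) => a <-; exists a.
exists (fun b => xchoose (fs' b)) => [a|b]; last exact/eqP/(xchooseP (fs' b)).
by apply: fi; rewrite (eqP (xchooseP (fs' (f a)))).
Qed.

Lemma dvdp_modp_sub (K : fieldType) (p d : {poly K}) : d %| p %% d - p.
Proof.
have -> : p %% d - p = - (p %/ d) * d by rewrite {2}(divp_eq p d); ring.
exact: dvdp_mull.
Qed.

From mathcomp Require Import zify.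

Arguments f_qin {K P1 P2}.
Arguments exists_y {K P1 P2 Q s t}.
Arguments size_exp_gt1 {K P n}.
Arguments inj_pow {K P1 P2 y s}.
Arguments dim_quot {K P}.
Arguments inj_surj {K U}.
Arguments size_qval {K P}.

Theorem mainTheorem14 (K : fieldType) (P1 P2 : {poly K}) :
  irreducible_poly P1 -> irreducible_poly P2 ->
  (exists f : {rmorphism quot_ring P1 -> quot_ring P2},
      bijective f /\ stabilizes_K f /\ (Q_f f)^`() != 0) ->
  forall n : nat, (1 <= n)%N ->
    exists g : {rmorphism quot_ring (P1 ^+ n) -> quot_ring (P2 ^+ n)},
      bijective g.
Proof.
move=> iP1 iP2 [f [fbij [[s [sbij fs]] dQ]]] n n1.
have sP1 : (1 < size P1)%N by case: iP1.
have sP2 : (1 < size P2)%N by case: iP2.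
have P10 : P1 != 0 by rewrite -size_poly_gt0 (ltn_trans _ sP1).
have P20 : P2 != 0 by rewrite -size_poly_gt0 (ltn_trans _ sP2).
set Q := Q_f f.
have sQ : (size Q < size P2)%N by apply: size_qval.
case: sbij => t st ts.
have stp : forall h, map_poly s (map_poly t h) = h.
  by move=> h; rewrite -map_poly_comp map_poly_id // => x _ /=; rewrite ts.
have fq := f_qin f s sP1 sP2 fs.
have finj : injective f by apply: bij_inj.
have Hinj : forall h, P2 %| (map_poly s h \Po Q) -> P1 %| h.
  move=> h H; rewrite -qin_eq0 //; apply/eqP; apply: finj.
  by rewrite fq rmorph0; apply/eqP; rewrite qin_eq0.
have Hroot : P2 %| (map_poly s P1 \Po Q).
  by rewrite -qin_eq0 // -fq; apply/eqP; rewrite -(rmorph0 f); apply: congr1; apply/eqP; rewrite qin_eq0 // dvdpp.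
case: (fbij) => fi fK Kf.
have Hsurj : exists R, P2 %| (map_poly s R \Po Q) - 'X.
  exists (val (fi (qX P2))); rewrite -qin_eq0 // raddfB /= -fq qin_val // Kf.
  by rewrite subrr.
have [y [yQ ny]] := exists_y iP1 iP2 stp Hinj Hroot Hsurj dQ sQ.
have yc : forall h, P2 %| (map_poly s h \Po y) - (map_poly s h \Po Q).
  by move=> h; apply: dvdp_comp_cong.
have HinjY : forall h, P2 %| (map_poly s h \Po y) -> P1 %| h.
  move=> h H; apply: Hinj.
  have -> : map_poly s h \Po Q = (map_poly s h \Po y) - ((map_poly s h \Po y) - (map_poly s h \Po Q)) by ring.
  by apply: dvdp_sub.
have HrootY : P2 %| (map_poly s P1 \Po y).
  have -> : map_poly s P1 \Po y = ((map_poly s P1 \Po y) - (map_poly s P1 \Po Q)) + (map_poly s P1 \Po Q) by ring.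
  by apply: dvdp_add.
have sP21 : (size P2 <= size P1)%N.
  have := @surj_dim K _ _ (@Lfun K P2 Q (size (mk_monic (monic_assoc P1))).-1).
  rewrite (dim_quot sP2).
  have -> : \dim {:{poly_((size (mk_monic (monic_assoc P1))).-1) K}} = (size P1).-1 by exact: dim_quot.
  move=> H; suff : ((size P2).-1 <= (size P1).-1)%N by lia.
  apply: H => b.
  exists (qin P1 (map_poly s (val (fi b)))).
  rewrite /Lfun; cbv beta.
  have E := @val_qin _ P1 (map_poly s (val (fi b))) sP1.
  rewrite modp_small in E; last by rewrite size_map_poly size_qval.
  apply: etrans (congr1 (fun w => qin P2 (w \Po Q)) E) _ => /=.
  by rewrite -fq qin_val // Kf.
have Gh : Ghyp K P1 P2 y s n.
  apply/and3P; split; try exact: size_exp_gt1.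
  exact: dvdp_exp2r.
have sPn : (size (P2 ^+ n) <= size (P1 ^+ n))%N.
  have e1 := size_exp P1 n; have e2 := size_exp P2 n.
  have g1 := size_exp_gt1 sP1 n1; have g2 := size_exp_gt1 sP2 n1.
  have : ((size P2).-1 * n <= (size P1).-1 * n)%N by rewrite leq_mul2r; apply/orP; right; lia.
  move=> H0; move: H0 e1 e2 g1 g2; move: ((size P1).-1 * n)%N ((size P2).-1 * n)%N (size (P1 ^+ n)) (size (P2 ^+ n)) => a b c d; lia.
exists (Gfun2 K P1 P2 y s n Gh : {rmorphism _ -> _}).
have ipow := inj_pow iP2 HinjY HrootY ny.
apply: inj_surj_bij.
  move=> a b e; apply/eqP; rewrite -subr_eq0; apply/eqP.
  have : Gfun2 K P1 P2 y s n Gh (a - b) = 0 by rewrite (rmorphB (Gfun2 K P1 P2 y s n Gh : {rmorphism _ -> _})) /= e subrr.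
  rewrite /Gfun2 /Gfun => /eqP; rewrite qin_eq0 ?size_exp_gt1 // => /ipow H.
  apply: val_inj => /=; case: (eqVneq (val (a - b)) 0) => // nz.
  have := dvdp_leq nz H; rewrite leqNgt (size_qval (a - b)) //.
  exact: size_exp_gt1.
move=> b.
have Minj : injective (@Lfun K (P2 ^+ n) y (size (mk_monic (monic_assoc (P2 ^+ n)))).-1).
  move=> u v e; apply/eqP; rewrite -subr_eq0; apply/eqP.
  have : Lfun K (P2 ^+ n) y _ (u - v) = 0 by rewrite raddfB /= e subrr.
  rewrite /Lfun => /eqP; rewrite qin_eq0 ?size_exp_gt1 // => H.
  rewrite -[val (u - v)]stp in H; move/ipow: H => H.
  suff Hv : val (u - v) = 0 by apply: val_inj; rewrite Hv.
  case: (eqVneq (map_poly t (val (u - v))) 0) => [e0|nz].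
    by rewrite -[val (u - v)]stp e0 rmorph0.
  have := dvdp_leq nz H; rewrite leqNgt.
  have es : size (map_poly t (val (u - v))) = size (val (u - v)).
    by rewrite -(size_map_poly s (map_poly t _)) stp.
  rewrite es; have := size_qval (u - v) (size_exp_gt1 sP2 n1); by move=> h1; rewrite (leq_trans h1 sPn).
have [u Mu] := inj_surj (@Lfun K (P2 ^+ n) y (size (mk_monic (monic_assoc (P2 ^+ n)))).-1) Minj b.
exists (qin (P1 ^+ n) (map_poly t (val u))).
rewrite /Gfun2 /Gfun -Mu /Lfun; cbv beta.
have E := @val_qin _ (P1 ^+ n) (map_poly t (val u)) (size_exp_gt1 sP1 n1).
apply: etrans (congr1 (fun w => qin (P2 ^+ n) (map_poly s w \Po y)) E) _ => /=.
apply: qin_eq; first exact: size_exp_gt1.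
rewrite -[X in _ - (X \Po y)]stp.
apply: (@Gcong K P1); first by case/and3P: Gh => _ _ H3.
exact: dvdp_modp_sub.
Qed.
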